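(* Let $n\ge1$, let $\sigma\in S_n$ have $d$ descents, and for $i,j\ge0$ let $c_{ij}^d$ be the number of ordered pairs $(\tau,\mu)\in S_n\times S_n$ such that $\tau$ has $i$ descents, $\mu$ has $j$ descents, and $\tau\mu=\sigma$. Then, as formal power series in $s,t$, $$\sum_{i,j\ge0}\frac{c_{ij}^d\,s^{i+1}t^{j+1}}{(1-s)^{n+1}(1-t)^{n+1}}=\sum_{a,b\ge0}\binom{n+ab-d-1}{n}s^at^b.$$ (In particular $c_{ij}^d$ depends on $\sigma$ only through $d$.)
   Context: For $\sigma\in S_n$, $\sigma$ has a descent at $i$ ($1\le i\le n-1$) if $\sigma(i+1)<\sigma(i)$. Binomial convention: $\binom{m}{n}=\frac{m(m-1)\cdots(m-n+1)}{n!}$ if $m\ge n$ and $\binom{m}{n}=0$ if $m<n$ (including negative $m$). *)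

(* Defs.v *)
From HB Require Import structures.
From mathcomp Require Import all_boot all_order all_algebra all_fingroup.
Set Implicit Arguments. Unset Strict Implicit. Unset Printing Implicit Defensive.

(* Number of descents of s : 'S_n.  Positions are 0-indexed: position i
   (0 <= i < n-1) is a descent iff s (i+1) < s i. *)
Definition des (n : nat) (s : 'S_n) : nat :=
  #|[set i : 'I_n | [exists j : 'I_n, (val j == i.+1) && (s j < s i)]]|.

Definition cnt (n : nat) (sigma : 'S_n) (i j : nat) : nat :=
  #|[set p : 'S_n * 'S_n |
      [&& des p.1 == i, des p.2 == j & [forall x, p.1 (p.2 x) == sigma x]]]|.

(* Binomial coefficient with the paper's convention:
   binom m k = m(m-1)...(m-k+1)/k! if m >= k, and 0 if m < k (m any integer). *)
Definition binomZ (m : int) (k : nat) : nat :=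
  match m with
  | Posz m' => 'C(m', k)   (* 'C(m',k) = 0 when m' < k *)
  | Negz _ => 0
  end.

(* Coefficient of s^a t^b of the formal power series
   sum_{i,j>=0} c_ij s^(i+1) t^(j+1) / ((1-s)^(n+1) (1-t)^(n+1)),
   using 1/(1-s)^(n+1) = sum_{k>=0} C(n+k, n) s^k. *)
Definition lhs_coef (n : nat) (sigma : 'S_n) (a b : nat) : nat :=
  \sum_(i < a) \sum_(j < b)
     cnt sigma i j * 'C(n + (a - i.+1), n) * 'C(n + (b - j.+1), n).

(* Main.v *)
Require Import Defs.
From HB Require Import structures.
From mathcomp Require Import all_boot all_order all_algebra all_fingroup.
Set Implicit Arguments. Unset Strict Implicit. Unset Printing Implicit Defensive.

Lemma lex_ltn (A A' B B' M : nat) : B < M -> B' < M ->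
  (A * M + B < A' * M + B') = (A < A') || ((A == A') && (B < B')).
Proof.
move=> HB HB'.
case: (ltngtP A A') => H /=.
apply: (leq_trans (n := A.+1 * M)); first by rewrite mulSn addnC ltn_add2r.
  by apply: leq_trans (leq_addr _ _); rewrite leq_mul2r H orbT.
apply/negbTE; rewrite -leqNgt.
  apply: (leq_trans (n := A'.+1 * M)); first by rewrite mulSn addnC leq_add2r ltnW.
  by apply: leq_trans (leq_addr _ _); rewrite leq_mul2r H orbT.
by rewrite H ltn_add2l.
Qed.

Lemma card_ltk (n k : nat) : k <= n -> #|[set u : 'I_n | u < k]| = k.
Proof.
move=> kn.
have -> : [set u : 'I_n | u < k] = [set widen_ord kn i | i : 'I_k].
  apply/setP => u; rewrite inE; apply/idP/imsetP.
  move=> uk; exists (Ordinal uk); first by rewrite inE. by apply: val_inj.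
  by case=> i _ ->; exact: (ltn_ord i).
rewrite card_imset ?card_ord //; by move=> i j /(congr1 val) /= /val_inj.
Qed.

Section Std.
Variable m : nat.
Local Notation n := m.+1.

Definition key (f : 'I_n -> nat) (x : 'I_n) : nat := f x * n + x.

Definition ck (p : 'S_n) (f : 'I_n -> nat) : bool :=
  [forall j : 'I_m, key f (p (inord j)) < key f (p (inord j.+1))].

Lemma key_inj f : injective (key f).
Proof.
move=> x y /eqP; rewrite /key.
case: (ltngtP (f x) (f y)) => H.
by rewrite eqn_leq andbC leqNgt (lex_ltn _ _ (ltn_ord x) (ltn_ord y)) H.
by rewrite eqn_leq leqNgt (lex_ltn _ _ (ltn_ord y) (ltn_ord x)) H.
by rewrite H eqn_add2l => /eqP; apply: val_inj.
Qed.

Lemma ck_glob0 p f : ck p f -> forall i j, i < j -> j < n ->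
  key f (p (inord i)) < key f (p (inord j)).
Proof.
move=> /forallP H i; elim=> // j IH; rewrite ltnS leq_eqVlt => /orP[/eqP -> | ij] jn.
  by have := H (@Ordinal m j jn).
apply: ltn_trans (IH ij (ltnW jn)) _; by have := H (@Ordinal m j jn).
Qed.

Lemma ck_glob p f : ck p f -> forall u v : 'I_n,
  (key f (p u) < key f (p v)) = (u < v).
Proof.
move=> H u v; case: (ltngtP u v) => uv.
by have := ck_glob0 H uv (ltn_ord v); rewrite !inord_val.
apply/negbTE; rewrite -leqNgt ltnW //.
  by have := ck_glob0 H uv (ltn_ord u); rewrite !inord_val.
by rewrite (val_inj uv) ltnn.
Qed.

Definition rk (f : 'I_n -> nat) (x : 'I_n) : nat := #|[set y | key f y < key f x]|.

Lemma rk_lt f x : rk f x < n.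
Proof.
rewrite /rk -[n in _ < n]card_ord; apply: proper_card; apply/properP; split.
  by apply/subsetP.
by exists x; rewrite ?inE ?ltnn.
Qed.

Lemma rk_mono f x y : (rk f x < rk f y) = (key f x < key f y).
Proof.
case: (ltnP (key f x) (key f y)) => H.
apply: proper_card; apply/properP; split.
    apply/subsetP => z; rewrite !inE => Hz; exact: ltn_trans Hz H.
  by exists x; rewrite !inE ?ltnn.
apply/negbTE; rewrite -leqNgt; apply: subset_leq_card.
  apply/subsetP => z; rewrite !inE => Hz; exact: leq_trans Hz H.
Qed.

Definition rkO f x : 'I_n := Ordinal (rk_lt f x).

Lemma rkO_inj f : injective (rkO f).
Proof.
move=> x y /(congr1 val) /= E; apply: (@key_inj f).
case: (ltngtP (key f x) (key f y)) => // H.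
by move: H; rewrite -rk_mono E ltnn.
by move: H; rewrite -rk_mono E ltnn.
Qed.

Definition std f : 'S_n := (perm (@rkO_inj f))^-1.

Lemma rk_std f k : rk f (std f k) = k.
Proof.
have := permKV (perm (@rkO_inj f)) k; rewrite permE => /(congr1 val) /= <-.
by [].
Qed.

Lemma ck_std f : ck (std f) f.
Proof.
apply/forallP => j; have jm := ltn_ord j.
by rewrite -rk_mono !rk_std !inordK // ltnS ltnW.
Qed.

Lemma ck_uniq p f : ck p f -> p = std f.
Proof.
move=> H.
have E : forall k, rk f (p k) = k.
  move=> k; rewrite /rk.
  have -> : [set y | key f y < key f (p k)] = p @: [set u : 'I_n | u < k].
    apply/setP => y; rewrite inE; apply/idP/imsetP.
    move=> Hy; exists ((p^-1)%g y); last by rewrite permKV.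
      by rewrite inE -(ck_glob H) permKV.
    by case=> u; rewrite inE => uk ->; rewrite (ck_glob H).
  rewrite card_imset; [exact: card_ltk (ltnW (ltn_ord k)) | exact: perm_inj].
apply/permP => k; rewrite /std.
apply: (@perm_inj _ (perm (@rkO_inj f))).
rewrite permKV permE; apply: val_inj => /=; exact: E.
Qed.

End Std.

Lemma card_le_inj (T1 T2 : finType) (A : {set T1}) (B : {set T2}) (f : T1 -> T2) :
  {in A &, injective f} -> (forall x, x \in A -> f x \in B) -> #|A| <= #|B|.
Proof.
move=> inj fAB; rewrite -(card_in_imset inj); apply: subset_leq_card.
by apply/subsetP => y /imsetP [x xA ->]; apply: fAB.
Qed.

Lemma smono (f : nat -> nat) k : (forall j, j < k -> f j < f j.+1) ->
  forall i j, i <= j -> j <= k -> f i + (j - i) <= f j.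
Proof.
move=> H i; elim=> [|j IH]; first by rewrite leqn0 => /eqP ->; rewrite subnn addn0.
rewrite leq_eqVlt => /orP [/eqP <- _|]; first by rewrite subnn addn0.
rewrite ltnS => ij jk.
have := IH ij (ltnW jk); rewrite subSn // addnS => H1.
by apply: leq_ltn_trans H1 (H j jk).
Qed.

Lemma wmono (f : nat -> nat) k : (forall j, j < k -> f j <= f j.+1) ->
  forall i j, i <= j -> j <= k -> f i <= f j.
Proof.
move=> H i; elim=> [|j IH]; first by rewrite leqn0 => /eqP ->.
rewrite leq_eqVlt => /orP [/eqP <- _ //|].
rewrite ltnS => ij jk.
by apply: leq_trans (IH ij (ltnW jk)) (H j jk).
Qed.

Lemma arith1 x y w (c : bool) :
  (x + w < y + (w + c)) = (x < y) || ((x == y) && c).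
Proof.
rewrite (addnC w c) addnA ltn_add2r.
case: c => /=; rewrite ?addn1 ?addn0 ?ltnS ?andbT ?andbF ?orbF //.
by rewrite leq_eqVlt orbC.
Qed.

Section L1.
Variable m : nat.
Local Notation n := m.+1.

Definition dsc (p : 'S_n) (j : nat) : bool :=
  (j.+1 < n) && (p (inord j.+1) < p (inord j)).

Definition wd (p : 'S_n) (k : nat) : nat := \sum_(j < k) ~~ dsc p j.

Lemma wdS p k : wd p k.+1 = wd p k + ~~ dsc p k.
Proof. by rewrite /wd big_ord_recr. Qed.

Lemma wd_le p k : wd p k <= k.
Proof.
elim: k => [|k IH]; first by rewrite /wd big_ord0.
rewrite wdS -addn1 leq_add //; by case: dsc.
Qed.

Lemma sum_bool_card (T : finType) (P : pred T) :
  #|[set x | P x]| = \sum_(x : T) P x.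
Proof.
rewrite -sum1dep_card big_mkcond /=; apply: eq_bigr => x _; by case: (P x).
Qed.

Lemma des_dsc p : des p = \sum_(j < n) dsc p j.
Proof.
rewrite /des sum_bool_card; apply: eq_bigr => i _; congr nat_of_bool.
apply/existsP/idP.
  case=> j /andP [/eqP ji lt]; rewrite /dsc -ji ltn_ord /=.
  by rewrite !inord_val.
case/andP => lt1 lt2; exists (inord i.+1); apply/andP; split.
  by apply/eqP; apply: inordK.
by rewrite -{2}(inord_val i).
Qed.

Lemma wd_des p : wd p m + des p = m.
Proof.
rewrite des_dsc big_ord_recr /= {2}/dsc ltnn /= addn0 /wd -big_split /=.
rewrite (eq_bigr (fun _ => 1)) ?sum_nat_const ?card_ord ?muln1 //.
by move=> i _; case: dsc.
Qed.

Lemma des_le (p : 'S_n) : des p <= m.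
Proof. by rewrite -{2}(wd_des p) leq_addl. Qed.

Definition Comp (p : 'S_n) (N : nat) : {set {ffun 'I_n -> 'I_N}} :=
  [set h : {ffun 'I_n -> 'I_N} | ck p (fun x => nat_of_ord (h x))].

Lemma ck_alt p (g : 'I_n -> nat) : ck p g =
  [forall j : 'I_m, g (p (inord j)) + wd p j < g (p (inord j.+1)) + wd p j.+1].
Proof.
apply: eq_forallb => j; rewrite wdS arith1 /key.
rewrite (lex_ltn _ _ (ltn_ord _) (ltn_ord _)); congr (_ || (_ && _)).
have jm := ltn_ord j.
have ne : p (inord j) != p (inord j.+1) :> nat.
  rewrite (inj_eq val_inj) (inj_eq perm_inj); apply/eqP => /(congr1 (@nat_of_ord n)).
  have j1 : j.+1 < n by rewrite ltnS.
  rewrite (inordK (ltnW j1)) (inordK j1) => /eqP.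
  by rewrite eqn_leq ltnn andbF.
rewrite /dsc ltnS jm /= ltnNge leq_eqVlt negb_or.
by rewrite eq_sym ne.
Qed.

Lemma tnthE M' (t : n.-tuple 'I_M'.+1) k : k < n ->
  nat_of_ord (tnth t (inord k)) = nth 0 (map val t) k.
Proof.
by move=> kn; rewrite (tnth_nth ord0) inordK // (nth_map ord0) // size_tuple.
Qed.

Lemma sortedE M' (t : n.-tuple 'I_M'.+1) :
  sorted ltn (map val t) =
  [forall j : 'I_m, nat_of_ord (tnth t (inord j)) < nat_of_ord (tnth t (inord j.+1))].
Proof.
apply/(sortedP 0)/forallP => H.
  move=> j; have j1 : j.+1 < n by rewrite ltnS.
  rewrite (tnthE t (ltnW j1)) (tnthE t j1); apply: H.
  by rewrite size_map size_tuple.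
move=> i; rewrite size_map size_tuple => i1.
have := H (@Ordinal m i i1); rewrite /= (tnthE t (ltnW i1)) (tnthE t i1).
by [].
Qed.

Section Bij.
Variables (p : 'S_n) (N' : nat).
Local Notation W := (wd p m).
Local Notation N := N'.+1.
Local Notation M := (N' + W).+1.

Definition phi (g : {ffun 'I_n -> 'I_N}) : n.-tuple 'I_M :=
  [tuple (inord (g (p i) + wd p i) : 'I_M) | i < n].

Definition psi (t : n.-tuple 'I_M) : {ffun 'I_n -> 'I_N} :=
  [ffun x => inord (tnth t ((p^-1)%g x) - wd p ((p^-1)%g x))].

Definition TT : {set n.-tuple 'I_M} := [set t : n.-tuple 'I_M | sorted ltn (map val t)].

Lemma Zbound g : g \in Comp p N -> forall i : 'I_n, g (p i) + wd p i < M.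
Proof.
rewrite inE ck_alt => /forallP H.
pose Zn j := (g (p (inord j)) : nat) + wd p j.
have inc : forall j, j < m -> Zn j < Zn j.+1.
  by move=> j jm; have := H (Ordinal jm).
move=> i; have im : i <= m by rewrite -ltnS.
have := smono inc im (leqnn m); rewrite /Zn inord_val => Hi.
apply: leq_ltn_trans (leq_trans (leq_addr _ _) Hi) _.
by rewrite ltnS leq_add2r -ltnS.
Qed.

Lemma phi_in g : g \in Comp p N -> phi g \in TT.
Proof.
move=> Hg; have ZB := Zbound Hg.
have Hg' := Hg; rewrite inE ck_alt in Hg'; move/forallP: Hg' => H.
rewrite inE sortedE; apply/forallP => j.
have j1 : j.+1 < n by rewrite ltnS.
rewrite !tnth_mktuple.
have := ZB (inord j); have := ZB (inord j.+1).
rewrite (inordK (ltnW j1)) (inordK j1) => B1 B0.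
by rewrite (inordK B1) (inordK B0); apply: H.
Qed.

Lemma phi_inj : {in Comp p N &, injective phi}.
Proof.
move=> g1 g2 H1 H2 E; apply/ffunP => x.
have := congr1 (fun t => val (tnth t ((p^-1)%g x))) E.
rewrite /= !tnth_mktuple (inordK (Zbound H1 _)) (inordK (Zbound H2 _)).
by rewrite permKV => /eqP; rewrite eqn_add2r => /eqP /val_inj.
Qed.

Lemma Tfacts t : t \in TT -> forall i : 'I_n,
  wd p i <= tnth t i /\ tnth t i - wd p i < N.
Proof.
rewrite inE sortedE => /forallP H.
pose tn j := val (tnth t (inord j)).
have inc : forall j, j < m -> tn j < tn j.+1.
  by move=> j jm; have := H (Ordinal jm).
have wle : forall j, j <= m -> wd p j <= tn j.
  move=> j jm; apply: leq_trans (wd_le p j) _.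
  by have := smono inc (leq0n j) jm; rewrite subn0; apply: leq_trans; rewrite leq_addl.
have winc : forall j, j < m -> tn j - wd p j <= tn j.+1 - wd p j.+1.
  move=> j jm; rewrite wdS -(subnDr (~~ dsc p j) (tn j)).
  apply: leq_sub2r; apply: leq_trans (inc j jm); rewrite -addn1 leq_add2l.
  by case: dsc.
move=> i; have im : i <= m by rewrite -ltnS.
have := wle i im; have := wmono winc im (leqnn m); rewrite /tn !inord_val.
move=> A B; split => //; apply: leq_ltn_trans A _.
rewrite ltnS leq_subLR; apply: (leq_trans (n := N' + W)); [exact: (ltn_ord (tnth t (inord m))) | by rewrite addnC].
Qed.

Lemma psi_in t : t \in TT -> psi t \in Comp p N.
Proof.
move=> Ht; have TF := Tfacts Ht.
have Ht' := Ht; rewrite inE sortedE in Ht'; move/forallP: Ht' => H.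
rewrite inE ck_alt; apply/forallP => j.
have j1 : j.+1 < n by rewrite ltnS.
rewrite !ffunE !permK.
have [A0 B0] := TF (inord j); have [A1 B1] := TF (inord j.+1).
move: (H j) A0 A1 B0 B1; rewrite (inordK (ltnW j1)) (inordK j1) => Hj A0 A1 B0 B1.
by rewrite (inordK B0) (inordK B1) !subnK.
Qed.

Lemma psi_inj : {in TT &, injective psi}.
Proof.
move=> t1 t2 H1 H2 E; apply: eq_from_tnth => i; apply: val_inj.
have := congr1 (fun g : {ffun 'I_n -> 'I_N} => nat_of_ord (g (p i))) E.
rewrite /= !ffunE !permK.
have [A1 B1] := Tfacts H1 i; have [A2 B2] := Tfacts H2 i.
rewrite (inordK B1) (inordK B2) => E'.
by rewrite -(subnK A1) -(subnK A2) E'.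
Qed.

Lemma card_Comp_S : #|Comp p N| = #|TT|.
Proof.
apply/eqP; rewrite eqn_leq.
rewrite (card_le_inj phi_inj phi_in) /=.
exact: (card_le_inj psi_inj psi_in).
Qed.

End Bij.

Lemma card_Comp (p : 'S_n) N : #|Comp p N| = 'C(m + N - des p, n).
Proof.
case: N => [|N'].
  rewrite bin_small; last by rewrite addn0 ltnS leq_subr.
  apply/eqP; rewrite -leqn0; apply: leq_trans (max_card _) _.
  by rewrite card_ffun !card_ord exp0n.
rewrite card_Comp_S /TT card_ltn_sorted_tuples.
congr 'C(_, _); have E := wd_des p.
move: E; set w := wd p m; set d := des p => E.
by rewrite -E addnAC addnK addnS addnC.
Qed.
End L1.

Lemma enc_proof (a b x y : nat) : x < b -> y < a -> x * a + y < b * a.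
Proof.
move=> xb ya; apply: (leq_trans (n := x.+1 * a)).
  by rewrite mulSn addnC ltn_add2r.
by rewrite leq_mul2r xb orbT.
Qed.

Lemma enc_inj (a x1 x2 y1 y2 : nat) : y1 < a -> y2 < a ->
  x1 * a + y1 = x2 * a + y2 -> x1 = x2 /\ y1 = y2.
Proof.
move=> H1 H2 E; have a0 : 0 < a by apply: leq_ltn_trans H1.
split.
  have := congr1 (fun z => z %/ a) E; rewrite /= !divnMDl // !divn_small //.
  by rewrite !addn0.
have := congr1 (fun z => z %% a) E; rewrite /= !modnMDl !modn_small //.
Qed.

Section Core.
Variable m : nat.
Local Notation n := m.+1.
Variables (a b : nat).

Definition enc (x : 'I_b) (y : 'I_a) : 'I_(b * a) :=
  Ordinal (enc_proof (ltn_ord x) (ltn_ord y)).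

Definition stdY (Y : {ffun 'I_n -> 'I_a}) : 'S_n :=
  std (fun z => nat_of_ord (Y z)).

Definition Phi (q : {ffun 'I_n -> 'I_a} * {ffun 'I_n -> 'I_b}) :
  {ffun 'I_n -> 'I_(b * a)} :=
  [ffun x => enc (q.2 ((stdY q.1)^-1%g x)) (q.1 x)].

Lemma Phi_inj : injective Phi.
Proof.
move=> [Y1 X1] [Y2 X2] E.
have E' : forall x, X1 ((stdY Y1)^-1%g x) = X2 ((stdY Y2)^-1%g x) /\ Y1 x = Y2 x.
  move=> x; have := congr1 (fun h : {ffun 'I_n -> 'I_(b * a)} => nat_of_ord (h x)) E.
  rewrite /= !ffunE /= => /(enc_inj (ltn_ord _) (ltn_ord _)) [e1 e2].
  by split; apply: val_inj.
have EY : Y1 = Y2 by apply/ffunP => x; case: (E' x).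
subst Y2; congr (_, _); apply/ffunP => u.
by have [+ _] := E' (stdY Y1 u); rewrite permK.
Qed.

Lemma Phi_bij : bijective Phi.
Proof.
apply: inj_card_bij; first exact: Phi_inj.
by rewrite card_prod !card_ffun !card_ord expnMn mulnC.
Qed.

Lemma key_Phi Y X (u v : 'I_n) :
  let tau := stdY Y in
  (key (fun x => nat_of_ord (Phi (Y, X) x)) (tau u) <
   key (fun x => nat_of_ord (Phi (Y, X) x)) (tau v)) =
  (key (fun x => nat_of_ord (X x)) u < key (fun x => nat_of_ord (X x)) v).
Proof.
move=> tau; rewrite /key !ffunE /= !permK !mulnDl -!mulnA -!addnA.
have bnd : forall w : 'I_n, Y (tau w) * n + tau w < a * n.
  by move=> w; apply: enc_proof.
rewrite (lex_ltn _ _ (bnd u) (bnd v)) (lex_ltn _ _ (ltn_ord u) (ltn_ord v)).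
have := ck_glob (ck_std (fun z => nat_of_ord (Y z))) u v.
by rewrite /key => ->.
Qed.

Lemma Phi_ck (sigma : 'S_n) Y X :
  (Phi (Y, X) \in Comp sigma (b * a)) =
  (X \in Comp (sigma * (stdY Y)^-1)%g b).
Proof.
rewrite !inE /ck; apply: eq_forallb => j.
have Es : forall w, sigma w = stdY Y (((sigma * (stdY Y)^-1)%g) w).
  by move=> w; rewrite permM permKV.
by rewrite (Es (inord j)) (Es (inord j.+1)) key_Phi.
Qed.

Lemma core (sigma : 'S_n) :
  #|Comp sigma (b * a)| =
  \sum_(tau : 'S_n) #|Comp tau a| * #|Comp (sigma * tau^-1)%g b|.
Proof.
rewrite -sum1_card (reindex Phi) /=; last exact: onW_bij Phi_bij.
rewrite (eq_bigl (fun q => true && (q.2 \in Comp (sigma * (stdY q.1)^-1)%g b)));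
  last by move=> [Y X]; rewrite Phi_ck.
rewrite -(pair_big_dep xpredT (fun Y X => X \in Comp (sigma * (stdY Y)^-1)%g b)
                         (fun _ _ => 1)) /=.
rewrite (eq_bigr (fun Y => #|Comp (sigma * (stdY Y)^-1)%g b|)); last first.
  by move=> Y _; rewrite sum1_card.
rewrite (partition_big stdY xpredT) //=.
apply: eq_bigr => tau _.
rewrite (eq_bigr (fun _ => #|Comp (sigma * tau^-1)%g b|)); last first.
  by move=> Y /eqP ->.
rewrite (eq_bigl (fun Y => Y \in Comp tau a)); last first.
  move=> Y; rewrite inE /=.
  apply/eqP/idP => [<-|H]; first exact: ck_std.
  by rewrite /stdY -(ck_uniq H).
by rewrite sum_nat_const.
Qed.

End Core.

Lemma binomZ_eq (k d N : nat) : d <= k ->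
  binomZ ((k.+1 + N)%:Z - d%:Z - 1)%R k.+1 = 'C(k + N - d, k.+1).
Proof.
move=> dk.
have h1 : d <= k.+1 + N by apply: leq_trans (leq_trans dk (leqnSn k)) (leq_addr _ _).
have h2 : d <= k + N by apply: leq_trans dk (leq_addr _ _).
rewrite subzn // -predn_int; last by rewrite addSn subSn.
by rewrite /binomZ addSn subSn.
Qed.

Lemma sum_eq_ord (a x : nat) : \sum_(i < a) (x == i) = (x < a).
Proof.
elim: a => [|a IH]; first by rewrite big_ord0.
rewrite big_ord_recr IH /=.
case: (ltngtP x a) => [H|H|->].
    by rewrite (leqW H).
  by rewrite ltnS leqNgt H.
by rewrite ltnSn.
Qed.

Lemma sum_ind (a x : nat) (F : nat -> nat) : \sum_(i < a) (x == i) * F i = (x < a) * F x.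
Proof.
rewrite -sum_eq_ord big_distrl /=; apply: eq_bigr => i _.
by case: eqP => [->|].
Qed.

Section Final.
Variable m : nat.
Local Notation n := m.+1.

Lemma Cnorm a d : (d < a) * 'C(n + (a - d.+1), n) = 'C(m + a - d, n).
Proof.
case: (ltnP d a) => H /=.
  by rewrite mul1n addSn -addnS subnSK // addnBA // ltnW.
rewrite mul0n bin_small // ltnS leq_subLR addnC leq_add2r //.
Qed.

Lemma compE (sigma : 'S_n) (p : 'S_n * 'S_n) :
  [forall x, p.1 (p.2 x) == sigma x] = (p.2 == (sigma * p.1^-1)%g).
Proof.
apply/forallP/eqP => H.
  apply/permP => x; rewrite permM; apply: (@perm_inj _ p.1).
  by rewrite permKV; apply/eqP.
by move=> x; rewrite H permM permKV.
Qed.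

Lemma lhs_rearr (sigma : 'S_n) a b : lhs_coef sigma a b =
  \sum_(tau : 'S_n) 'C(m + a - des tau, n) * 'C(m + b - des (sigma * tau^-1)%g, n).
Proof.
pose Ca i := 'C(n + (a - i.+1), n).
pose Cb j := 'C(n + (b - j.+1), n).
pose C (p : 'S_n * 'S_n) : nat := [forall x, p.1 (p.2 x) == sigma x].
transitivity (\sum_(i < a) \sum_(j < b) \sum_(p : 'S_n * 'S_n)
   C p * (((des p.1 == i) * Ca i) * ((des p.2 == j) * Cb j))).
  apply: eq_bigr => i _; apply: eq_bigr => j _.
  rewrite /cnt sum_bool_card !big_distrl /=; apply: eq_bigr => p _.
  rewrite /C; case: (des p.1 == i); case: (des p.2 == j); case: [forall x, _];
    by rewrite /= ?mul0n ?muln0 ?mul1n ?muln1.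
rewrite exchange_big /=.
rewrite (eq_bigr (fun j : 'I_b => \sum_(p : 'S_n * 'S_n) \sum_(i < a)
   C p * (((des p.1 == i) * Ca i) * ((des p.2 == j) * Cb j)))); last first.
  by move=> j _; rewrite exchange_big.
rewrite exchange_big /=.
transitivity (\sum_(p : 'S_n * 'S_n) C p * ('C(m + a - des p.1, n) * 'C(m + b - des p.2, n))).
  apply: eq_bigr => p _.
  rewrite (eq_bigr (fun j : 'I_b => C p * ((\sum_(i < a) (des p.1 == i) * Ca i) * ((des p.2 == j) * Cb j)))); last first.
    by move=> j _; rewrite -big_distrr -big_distrl.
  by rewrite -big_distrr -big_distrr /= !sum_ind -!Cnorm.
rewrite -(pair_big xpredT xpredT (fun t u => C (t, u) * ('C(m + a - des t, n) * 'C(m + b - des u, n)))) /=.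
apply: eq_bigr => tau _.
rewrite (bigD1 (sigma * tau^-1)%g) //= big1 ?addn0; last first.
  by move=> u /negbTE Hu; rewrite /C (compE sigma (tau, u)) /= Hu.
by rewrite /C (compE sigma (tau, _)) /= eqxx mul1n.
Qed.

End Final.

Theorem proposition2p1 (n : nat) (hn : 0 < n) (sigma : 'S_n) :
  forall a b : nat,
    lhs_coef sigma a b
    = binomZ ((n + a * b)%:Z - (des sigma)%:Z - 1)%R n.
Proof.
case: n hn sigma => [//|m] _ sigma a b.
rewrite binomZ_eq; last exact: des_le.
case: a => [|a'].
  rewrite /lhs_coef big_ord0 bin_small // mul0n addn0 ltnS leq_subr //.
case: b => [|b'].
  rewrite /lhs_coef big1 ?bin_small // ?muln0 ?addn0 ?ltnS ?leq_subr //.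
  by move=> i _; rewrite big_ord0.
rewrite mulnC -card_Comp core lhs_rearr.
by apply: eq_bigr => tau _; rewrite !card_Comp.
Qed.
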